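(* Let $\mathbb{Z} = \langle g\rangle$ act freely and cospecially on a CAT(0) cube complex $X$ by combinatorial isometries. Then the set of vertices $x\in X^{(0)}$ for which $d(x,gx)$ is minimal spans a nonempty $\langle g\rangle$-invariant convex subcomplex of $X$ (called the combinatorial minset $\mathrm{Min}(g)$).
   Context: $d$ is the combinatorial metric on the vertex set of $X$ (path metric on the 1-skeleton). An action is cospecial if the quotient cube complex is special in the sense of Haglund–Wise (hyperplanes two-sided, no self-intersection, direct self-osculation or inter-osculation). *)

(* Defs.v *)
(* A CAT(0) cube complex X is represented by its 1-skeleton,
   a median graph (Chepoi/Roller: 1-skeleta of CAT(0) cube complexes are
   exactly the median graphs, and X is the cube completion of its 1-skeleton).
   Hyperplanes are represented through their (oriented) halfspaces. *)
From Stdlib Require Import ZArith List.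

Set Implicit Arguments.

Section Graphs.
Variable V : Type.
Variable adj : V -> V -> Prop.

Inductive walk : V -> V -> nat -> Prop :=
| walk0 x : walk x x 0
| walkS x y z n : adj x y -> walk y z n -> walk x z (S n).

Definition dist (x y : V) (n : nat) : Prop :=
  walk x y n /\ forall m, walk x y m -> n <= m.

Definition between (x z y : V) : Prop :=
  exists a b c, dist x z a /\ dist z y b /\ dist x y c /\ a + b = c.

Definition simple_graph : Prop :=
  (forall x y, adj x y -> adj y x) /\ (forall x, ~ adj x x).

Definition connected : Prop := forall x y, exists n, walk x y n.

Definition median_graph : Prop :=
  simple_graph /\ connected /\
  forall x y z, exists m, (between x m y /\ between y m z /\ between x m z) /\
    forall m', between x m' y /\ between y m' z /\ between x m' z -> m' = m.

(* halfspace W(x,y) of the hyperplane dual to the edge xy, on the side of x *)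
Definition halfspace (x y z : V) : Prop :=
  exists n m, dist z x n /\ dist z y m /\ n < m.

(* oriented edges xy and x'y' determine the same oriented hyperplane *)
Definition same_halfspace (x y x' y' : V) : Prop :=
  forall z, halfspace x y z <-> halfspace x' y' z.

Definition same_hyp (x y x' y' : V) : Prop :=
  same_halfspace x y x' y' \/ same_halfspace x y y' x'.

Definition cross (x y x' y' : V) : Prop :=
  (exists z, halfspace x y z /\ halfspace x' y' z) /\
  (exists z, halfspace x y z /\ halfspace y' x' z) /\
  (exists z, halfspace y x z /\ halfspace x' y' z) /\
  (exists z, halfspace y x z /\ halfspace y' x' z).

Definition no_square (v a b : V) : Prop :=
  ~ exists c, c <> v /\ adj a c /\ adj b c.

Fixpoint hamming (u w : list bool) : nat :=
  match u, w with
  | b :: u', c :: w' => (if Bool.eqb b c then 0 else 1) + hamming u' w'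
  | _, _ => 0
  end.

Definition is_cube (k : nat) (f : list bool -> V) : Prop :=
  (forall u w, length u = k -> length w = k -> f u = f w -> u = w) /\
  (forall u w, length u = k -> length w = k ->
      (adj (f u) (f w) <-> hamming u w = 1)).

(* a Z-action on X by combinatorial isometries (graph automorphisms);
   g = act 1 *)
Definition Z_action (act : Z -> V -> V) : Prop :=
  (forall x, act 0%Z x = x) /\
  (forall m n x, act (m + n)%Z x = act m (act n x)) /\
  (forall n x y, adj x y <-> adj (act n x) (act n y)).

(* free: no nontrivial element fixes a point of X, i.e. stabilises a cube *)
Definition free_action (act : Z -> V -> V) : Prop :=
  forall n, n <> 0%Z -> forall k f, is_cube k f ->
    ~ (forall u, length u = k -> exists w, length w = k /\ act n (f u) = f w).

(* Cospecial: the quotient X/<g> is special (Haglund--Wise), expressed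
   upstairs in X: hyperplanes of X/<g> are the <g>-orbits of hyperplanes
   of X. *)
Definition two_sided_q (act : Z -> V -> V) : Prop :=
  forall n x y, adj x y -> ~ same_halfspace (act n x) (act n y) y x.

Definition no_self_intersection_q (act : Z -> V -> V) : Prop :=
  forall n x y, adj x y -> ~ cross x y (act n x) (act n y).

Definition no_direct_self_osculation_q (act : Z -> V -> V) : Prop :=
  ~ exists n v a b,
      adj v a /\ adj v b /\ a <> b /\
      (* va, vb project to distinct edges of the quotient *)
      ~ (exists m, (act m v = v /\ act m a = b) \/ (act m v = b /\ act m a = v)) /\
      (* dual to the same hyperplane of the quotient, both oriented away from v *)
      same_halfspace v b (act n v) (act n a) /\
      no_square v a b.

Definition no_interosculation_q (act : Z -> V -> V) : Prop :=
  ~ exists x1 y1 x2 y2,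
      adj x1 y1 /\ adj x2 y2 /\
      (* distinct hyperplanes of the quotient *)
      (forall n, ~ same_hyp (act n x1) (act n y1) x2 y2) /\
      (exists n, cross x1 y1 (act n x2) (act n y2)) /\
      (exists v a b n1 n2, adj v a /\ adj v b /\
         same_hyp (act n1 x1) (act n1 y1) v a /\
         same_hyp (act n2 x2) (act n2 y2) v b /\
         no_square v a b).

Definition cospecial (act : Z -> V -> V) : Prop :=
  two_sided_q act /\ no_self_intersection_q act /\
  no_direct_self_osculation_q act /\ no_interosculation_q act.

Definition minset (act : Z -> V -> V) (x : V) : Prop :=
  exists n, dist x (act 1%Z x) n /\
    forall y m, dist y (act 1%Z y) m -> n <= m.

(* a vertex set spanning a convex subcomplex: geodesically convex in X^(1) *)
Definition convex_set (M : V -> Prop) : Prop :=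
  forall x y z, M x -> M y -> between x z y -> M z.

End Graphs.

(* Main.v *)
Require Import Defs.
From Stdlib Require Import ZArith List.
From Stdlib Require Import Lia Classical ClassicalEpsilon.
Set Implicit Arguments. Unset Strict Implicit.

Section X. End X.

Lemma walk_app V (adj : V -> V -> Prop) x y z n m :
  walk adj x y n -> walk adj y z m -> walk adj x z (n+m).
Proof. induction 1; intros; simpl; [assumption| econstructor; eauto]. Qed.

Lemma walk_snoc V (adj : V -> V -> Prop) x y z n :
  walk adj x y n -> adj y z -> walk adj x z (S n).
Proof. intros H1 H2. rewrite <- Nat.add_1_r. eapply walk_app; eauto.
  econstructor; eauto; constructor. Qed.

Lemma walk_rev V (adj : V -> V -> Prop) (Hs : forall x y, adj x y -> adj y x) x y n :
  walk adj x y n -> walk adj y x n.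
Proof. induction 1; [constructor|]. eapply walk_snoc; eauto. Qed.

Lemma least (P : nat -> Prop) : (exists n, P n) -> exists n, P n /\ forall m, P m -> n <= m.
Proof.
  intros [n Hn]. apply NNPP; intro Hno.
  assert (H: forall k j, j < k -> ~ P j).
  { induction k; intros j Hj HP; [lia|]. apply Hno. exists j; split; auto.
    intros m Hm. destruct (le_lt_dec j m); auto. exfalso; apply (IHk m); [lia|auto]. }
  apply (H (S n) n); auto.
Qed.

Definition dd V (adj : V -> V -> Prop) (x y : V) : nat :=
  epsilon (inhabits 0) (fun n => dist adj x y n).

Section G. End G.

Lemma dd_spec V (adj : V -> V -> Prop) (Hm : median_graph adj) x y : dist adj x y (dd adj x y).
Proof.
  destruct Hm as [_ [Hc _]]. destruct (Hc x y) as [n Hn].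
  destruct (@least (walk adj x y) (ex_intro _ n Hn)) as [k [Hk1 Hk2]].
  unfold dd. apply epsilon_spec. exists k; split; auto.
Qed.

Lemma dist_dd V (adj : V -> V -> Prop) (Hm : median_graph adj) x y n :
  dist adj x y n -> n = dd adj x y.
Proof. intros [H1 H2]. destruct (dd_spec Hm x y) as [H3 H4].
  specialize (H2 _ H3). specialize (H4 _ H1). lia. Qed.

Lemma dd_walk V (adj : V -> V -> Prop) (Hm : median_graph adj) x y n :
  walk adj x y n -> dd adj x y <= n.
Proof. intros. apply (proj2 (dd_spec Hm x y)); auto. Qed.

Lemma dd_walkD V (adj : V -> V -> Prop) (Hm : median_graph adj) x y :
  walk adj x y (dd adj x y).
Proof. apply (proj1 (dd_spec Hm x y)). Qed.

Lemma dd_refl V (adj : V -> V -> Prop) (Hm : median_graph adj) x : dd adj x x = 0.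
Proof. pose proof (dd_walk Hm (walk0 adj x)). lia. Qed.

Lemma dd_zero V (adj : V -> V -> Prop) (Hm : median_graph adj) x y : dd adj x y = 0 -> x = y.
Proof. intro H. pose proof (dd_walkD Hm x y) as W. rewrite H in W. inversion W; auto. Qed.

Lemma dd_sym V (adj : V -> V -> Prop) (Hm : median_graph adj) x y : dd adj x y = dd adj y x.
Proof.
  pose proof Hm as [[Hs _] _].
  pose proof (dd_walk Hm (walk_rev Hs (dd_walkD Hm x y))).
  pose proof (dd_walk Hm (walk_rev Hs (dd_walkD Hm y x))). lia. Qed.

Lemma dd_tri V (adj : V -> V -> Prop) (Hm : median_graph adj) x y z :
  dd adj x z <= dd adj x y + dd adj y z.
Proof. apply dd_walk; auto. eapply walk_app; apply dd_walkD; auto. Qed.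

Lemma dd_adj V (adj : V -> V -> Prop) (Hm : median_graph adj) x y : adj x y -> dd adj x y = 1.
Proof.
  intro H. pose proof Hm as [[_ Hi] _].
  assert (W : walk adj x y 1) by (econstructor; eauto; constructor).
  pose proof (dd_walk Hm W).
  destruct (dd adj x y) eqn:E; [|lia]. apply dd_zero in E; auto. subst. exfalso; eapply Hi; eauto.
Qed.

Lemma dd_step V (adj : V -> V -> Prop) (Hm : median_graph adj) x y n :
  dd adj x y = S n -> exists x1, adj x x1 /\ dd adj x1 y = n.
Proof.
  intro H. pose proof (dd_walkD Hm x y) as W. rewrite H in W. inversion W; subst.
  exists y0; split; auto. pose proof (dd_walk Hm H4).
  pose proof (dd_tri Hm x y0 y). pose proof (dd_adj Hm H1). lia.
Qed.

Lemma dd_one V (adj : V -> V -> Prop) (Hm : median_graph adj) x y : dd adj x y = 1 -> adj x y.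
Proof.
  intro H. destruct (dd_step Hm H) as [x1 [A B]]. apply dd_zero in B; auto. subst; auto. Qed.

Lemma between_iff V (adj : V -> V -> Prop) (Hm : median_graph adj) x z y :
  Defs.between adj x z y <-> dd adj x z + dd adj z y = dd adj x y.
Proof.
  split.
  - intros (a & b & c & H1 & H2 & H3 & H4).
    apply dist_dd in H1; apply dist_dd in H2; apply dist_dd in H3; auto. subst; auto.
  - intro H. exists (dd adj x z), (dd adj z y), (dd adj x y).
    repeat split; try apply dd_spec; auto.
Qed.

Lemma hs_iff V (adj : V -> V -> Prop) (Hm : median_graph adj) x y z :
  halfspace adj x y z <-> dd adj z x < dd adj z y.
Proof.
  split.
  - intros (n & m & H1 & H2 & H3). apply dist_dd in H1; apply dist_dd in H2; auto. subst; auto.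
  - intro H. exists (dd adj z x), (dd adj z y). repeat split; try apply dd_spec; auto.
Qed.

Lemma med V (adj : V -> V -> Prop) (Hm : median_graph adj) x y z :
  exists m, (dd adj x m + dd adj m y = dd adj x y /\ dd adj y m + dd adj m z = dd adj y z /\
             dd adj x m + dd adj m z = dd adj x z) /\
    forall m', dd adj x m' + dd adj m' y = dd adj x y /\ dd adj y m' + dd adj m' z = dd adj y z /\
             dd adj x m' + dd adj m' z = dd adj x z -> m' = m.
Proof.
  pose proof Hm as [_ [_ Hmed]]. destruct (Hmed x y z) as [m [[A [B C]] U]].
  exists m. rewrite !between_iff in A, B, C by auto. split; [auto|].
  intros m' (A' & B' & C'). apply U. rewrite !between_iff by auto. auto.
Qed.

Lemma F2 V (adj : V -> V -> Prop) (Hm : median_graph adj) a b : adj a b ->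
  forall w, dd adj w b = dd adj w a + 1 \/ dd adj w a = dd adj w b + 1.
Proof.
  intros Hab w. destruct (med Hm w a b) as [m [[A [B C]] _]].
  rewrite (dd_adj Hm Hab) in B.
  destruct (dd adj a m) eqn:E.
  - apply dd_zero in E; auto. subst. rewrite dd_refl in A by auto. left. lia.
  - assert (dd adj m b = 0) by lia. apply dd_zero in H; auto. subst.
    rewrite dd_refl in C by auto. rewrite dd_sym with (x:=b) in A by auto.
    rewrite (dd_adj Hm Hab) in A. right; lia.
Qed.

Lemma F2' V (adj : V -> V -> Prop) (Hm : median_graph adj) a b : adj a b ->
  forall w, dd adj w a < dd adj w b <-> ~ dd adj w b < dd adj w a.
Proof. intros H w. destruct (F2 Hm H w); lia. Qed.

Lemma common2 V (adj : V -> V -> Prop) (Hm : median_graph adj) p c q :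
  adj p c -> adj c q -> p <> q -> dd adj p q = 2.
Proof.
  intros H1 H2 H3. pose proof (dd_tri Hm p c q). rewrite (dd_adj Hm H1), (dd_adj Hm H2) in H.
  destruct (F2 Hm H2 p); rewrite (dd_adj Hm H1) in H0; try lia.
  assert (dd adj p q = 0) by lia. apply dd_zero in H4; auto. contradiction.
Qed.

Lemma adj_sym V (adj : V -> V -> Prop) (Hm : median_graph adj) x y : adj x y -> adj y x.
Proof. destruct Hm as [[Hs _] _]; auto. Qed.

Lemma square_transfer V (adj : V -> V -> Prop) (Hm : median_graph adj) u v u' v' :
  adj u v -> adj v v' -> adj v' u' -> adj u' u -> u' <> v -> u <> v' ->
  forall w, dd adj w v < dd adj w u -> dd adj w v' < dd adj w u'.
Proof.
  intros H1 H2 H3 H4 N1 N2 w Hw.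
  destruct (Nat.lt_ge_cases (dd adj w v') (dd adj w u')) as [|Hge]; auto. exfalso.
  pose proof (F2 Hm H1 w). pose proof (F2 Hm H2 w). pose proof (F2 Hm H3 w). pose proof (F2 Hm H4 w).
  assert (E1 : dd adj w u' = dd adj w v /\ dd adj w v' = dd adj w v + 1) by lia. clear H H0 H5 H6.
  assert (D2 : dd adj u' v = 2) by (eapply (common2 Hm); eauto).
  destruct (med Hm w u' v) as [m [[A [B C]] _]].
  rewrite (dd_sym Hm u' m) in B.
  assert (Mu : dd adj m u' = 1) by lia. assert (Mv : dd adj m v = 1) by lia.
  assert (Wm : dd adj w m + 1 = dd adj w v) by lia.
  assert (N3 : m <> u) by (intro; subst; lia).
  assert (N4 : m <> v') by (intro; subst; lia).
  apply dd_one in Mu; auto. apply dd_one in Mv; auto.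
  assert (Duv' : dd adj u v' = 2) by (eapply (common2 Hm); eauto).
  assert (Dum : dd adj u m = 2) by (eapply (common2 Hm); [|apply (adj_sym Hm)|]; eauto).
  assert (Dv'm : dd adj v' m = 2) by (eapply (common2 Hm); [|apply (adj_sym Hm)|]; eauto).
  destruct (med Hm u v' m) as [M [_ U]].
  assert (e1 : u' = M).
  { apply U. rewrite (dd_adj Hm (adj_sym Hm H4)), (dd_adj Hm H3), (dd_adj Hm (adj_sym Hm H3)),
      (dd_adj Hm (adj_sym Hm Mu)). lia. }
  assert (e2 : v = M).
  { apply U. rewrite (dd_adj Hm H1), (dd_adj Hm (adj_sym Hm H2)), (dd_adj Hm H2),
      (dd_adj Hm (adj_sym Hm Mv)). lia. }
  congruence.
Qed.

Lemma lemS V (adj : V -> V -> Prop) (Hm : median_graph adj) a b : adj a b ->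
  forall k u v, adj u v -> dd adj u a < dd adj u b -> dd adj v b < dd adj v a -> dd adj u a = k ->
  forall w, dd adj w v < dd adj w u -> dd adj w b < dd adj w a.
Proof.
  intros Hab k. induction k; intros u v Huv Hu Hv Hk w Hw.
  - apply dd_zero in Hk; auto. subst u.
    rewrite (dd_sym Hm v a), (dd_adj Hm Huv) in Hv.
    assert (dd adj v b = 0) by lia. apply dd_zero in H; auto. subst; auto.
  - pose proof (F2 Hm Hab u). pose proof (F2 Hm Huv a). pose proof (F2 Hm Huv b). pose proof (F2 Hm Hab v).
    rewrite !(dd_sym Hm a), !(dd_sym Hm b) in *.
    assert (Ev : dd adj v a = k + 2 /\ dd adj v b = k + 1 /\ dd adj u b = k + 2) by lia. clear H H0 H1 H2.
    destruct (dd_step Hm Hk) as [u1 [Hu1 Du1]].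
    pose proof (F2 Hm Hab u1). pose proof (dd_tri Hm u u1 b). rewrite (dd_adj Hm Hu1) in H0.
    assert (Du1b : dd adj u1 b = k + 1) by lia. clear H H0.
    assert (N1 : u1 <> v) by (intro; subst; lia).
    assert (D2 : dd adj u1 v = 2) by (eapply (common2 Hm); [apply (adj_sym Hm); exact Hu1|exact Huv|exact N1]).
    destruct (med Hm u1 v b) as [m [[A [B C]] _]].
    rewrite (dd_sym Hm v m) in B.
    assert (M1 : dd adj u1 m = 1) by lia. assert (M2 : dd adj m v = 1) by lia.
    assert (M3 : dd adj m b = k) by lia.
    apply dd_one in M1; auto. apply dd_one in M2; auto.
    pose proof (F2 Hm M1 a). pose proof (dd_tri Hm v m a).
    rewrite (dd_adj Hm (adj_sym Hm M2)) in H0. rewrite !(dd_sym Hm a) in H.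
    assert (Dma : dd adj m a = k + 1) by lia. clear H H0.
    assert (IH := IHk u1 m M1 ltac:(lia) ltac:(lia) Du1 w).
    apply IH. eapply (square_transfer Hm (u:=u) (v:=v)); eauto; try (apply (adj_sym Hm); auto).
    intro; subst; lia.
Qed.

Lemma lemE V (adj : V -> V -> Prop) (Hm : median_graph adj) a b u v : adj a b -> adj u v ->
  dd adj u a < dd adj u b -> dd adj v b < dd adj v a ->
  forall w, dd adj w u < dd adj w v <-> dd adj w a < dd adj w b.
Proof.
  intros Hab Huv Hu Hv w. split.
  - intro H. eapply (lemS Hm (adj_sym Hm Hab) (u:=v) (v:=u)); eauto. apply (adj_sym Hm); auto.
  - intros H. apply NNPP; intro H'.
    assert (Hn : dd adj w v < dd adj w u) by (destruct (F2 Hm Huv w); lia).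
    pose proof (lemS Hm Hab Huv Hu Hv eq_refl Hn). lia.
Qed.

Lemma convex_hs V (adj : V -> V -> Prop) (Hm : median_graph adj) a b : adj a b ->
  forall n u v w, dd adj u v = n -> dd adj u a < dd adj u b -> dd adj w a < dd adj w b ->
  dd adj u v + dd adj v w = dd adj u w -> dd adj v a < dd adj v b.
Proof.
  intros Hab n. induction n; intros u v w Hn Hu Hw Hb.
  - apply dd_zero in Hn; auto. subst; auto.
  - destruct (dd_step Hm Hn) as [u1 [Hu1 D1]].
    pose proof (dd_tri Hm u1 v w). pose proof (dd_tri Hm u u1 w). rewrite (dd_adj Hm Hu1) in H0.
    destruct (F2 Hm Hab u1).
    + eapply (IHn u1 v w); auto; lia.
    + pose proof (proj2 (lemE Hm Hab Hu1 Hu ltac:(lia) w) Hw).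
      rewrite (dd_sym Hm w u), (dd_sym Hm w u1) in H2. lia.
Qed.

Lemma gate V (adj : V -> V -> Prop) (Hm : median_graph adj) a b y : adj a b ->
  exists p, dd adj p a < dd adj p b /\
    forall w, dd adj w a < dd adj w b -> dd adj y p + dd adj p w = dd adj y w.
Proof.
  intros Hab.
  destruct (@least (fun n => exists p, dd adj p a < dd adj p b /\ dd adj y p = n)) as [n [[p [Hp Hyp]] Hmin]].
  { exists (dd adj y a), a. split; auto. rewrite dd_refl, (dd_adj Hm Hab); auto. }
  exists p. split; auto. intros w Hw.
  destruct (med Hm y p w) as [M [[A [B C]] _]].
  assert (HM : dd adj M a < dd adj M b).
  { eapply (convex_hs Hm Hab eq_refl (u:=p) (w:=w)); eauto. }
  assert (n <= dd adj y M) by (apply Hmin; eauto).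
  assert (dd adj M p = 0) by lia. apply dd_zero in H0; auto. subst. lia.
Qed.

Lemma act_walk V (adj : V -> V -> Prop) (act : Z -> V -> V) (HZ : Z_action adj act) k x y n :
  walk adj x y n -> walk adj (act k x) (act k y) n.
Proof.
  destruct HZ as [_ [_ Ha]]. induction 1; [constructor|]. econstructor; eauto. apply Ha; auto.
Qed.

Lemma act_inv V (adj : V -> V -> Prop) (act : Z -> V -> V) (HZ : Z_action adj act) k x :
  act (- k)%Z (act k x) = x.
Proof. destruct HZ as [H0 [H1 _]]. rewrite <- H1, Z.add_opp_diag_l; auto. Qed.

Lemma act_inv' V (adj : V -> V -> Prop) (act : Z -> V -> V) (HZ : Z_action adj act) k x :
  act k (act (- k)%Z x) = x.
Proof. destruct HZ as [H0 [H1 _]]. rewrite <- H1, Z.add_opp_diag_r; auto. Qed.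

Lemma act_dd V (adj : V -> V -> Prop) (Hm : median_graph adj) (act : Z -> V -> V)
  (HZ : Z_action adj act) k x y : dd adj (act k x) (act k y) = dd adj x y.
Proof.
  pose proof (dd_walk Hm (act_walk HZ k (dd_walkD Hm x y))).
  pose proof (dd_walk Hm (act_walk HZ (-k) (dd_walkD Hm (act k x) (act k y)))).
  rewrite !(act_inv HZ) in H0. lia.
Qed.

Lemma act_adj V (adj : V -> V -> Prop) (act : Z -> V -> V) (HZ : Z_action adj act) k x y :
  adj x y -> adj (act k x) (act k y).
Proof. destruct HZ as [_ [_ Ha]]. apply Ha. Qed.

Lemma minset_iff V (adj : V -> V -> Prop) (Hm : median_graph adj) (act : Z -> V -> V) x :
  minset adj act x <-> forall y, dd adj x (act 1%Z x) <= dd adj y (act 1%Z y).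
Proof.
  split.
  - intros [n [Hn H]] y. apply (dist_dd Hm) in Hn. subst. apply (H y). apply (dd_spec Hm).
  - intro H. exists (dd adj x (act 1%Z x)). split; [apply (dd_spec Hm)|].
    intros y m Hy. apply (dist_dd Hm) in Hy. subst; auto.
Qed.

Lemma key V (adj : V -> V -> Prop) (Hm : median_graph adj) (act : Z -> V -> V)
  (HZ : Z_action adj act) (Hcs : cospecial adj act) x y z :
  minset adj act x -> minset adj act y -> adj x z -> dd adj x y = 1 + dd adj z y ->
  minset adj act z.
Proof.
  intros Hx Hy Hxz Hxy.
  destruct Hcs as [Htwo [Hnsi _]].
  rewrite (minset_iff Hm) in Hx, Hy.
  set (g := act 1%Z) in *.
  set (l := dd adj x (g x)). assert (Hlx : dd adj x (g x) = l) by reflexivity. clearbody l.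
  assert (Hl : forall w, l <= dd adj w (g w)) by (rewrite <- Hlx; exact Hx).
  apply (minset_iff Hm). fold g.
  enough (dd adj z (g z) <= l) by (intro w; specialize (Hl w); lia).
  apply NNPP; intro Hbig.
  assert (Hgxz : adj (g x) (g z)) by (apply act_adj; auto).
  assert (Dgxz : dd adj (g x) (g z) = 1) by (apply dd_adj; auto).
  assert (Dxz : dd adj x z = 1) by (apply dd_adj; auto).
  assert (E1 : dd adj z (g x) = l + 1).
  { pose proof (F2 Hm Hxz (g x)). pose proof (dd_tri Hm z (g x) (g z)).
    rewrite !(dd_sym Hm (g x)) in H. lia. }
  assert (E2 : dd adj z (g z) = l + 2).
  { pose proof (F2 Hm Hgxz z). lia. }
  assert (E3 : dd adj (g z) x = l + 1).
  { pose proof (F2 Hm Hxz (g z)). pose proof (dd_tri Hm (g z) (g x) x).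
    pose proof (dd_sym Hm (g z) z). pose proof (dd_sym Hm (g z) (g x)). pose proof (dd_sym Hm (g x) x). lia. }
  assert (NoQ1 : forall w, dd adj w z < dd adj w x -> ~ dd adj w (g z) < dd adj w (g x)).
  { intros w H1 H2. apply (Hnsi 1%Z z x (adj_sym Hm Hxz)).
    unfold cross. setoid_rewrite hs_iff; auto. fold g.
    split; [exists w; auto|]. split; [exists z|]; [rewrite dd_refl, (dd_adj Hm (adj_sym Hm Hxz)) by auto; lia|].
    split; [exists (g z)|exists x].
    - rewrite dd_refl, (dd_sym Hm (g z) (g x)), Dgxz by auto. rewrite (dd_sym Hm (g z) z). lia.
    - rewrite dd_refl, Dxz by auto. rewrite (dd_sym Hm x (g z)), E3. lia. }
  assert (Hyz : dd adj y z < dd adj y x) by (rewrite (dd_sym Hm y z), (dd_sym Hm y x); lia).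
  assert (Hgy : dd adj (g y) x < dd adj (g y) z).
  { assert (dd adj (g y) (g z) < dd adj (g y) (g x)) by (unfold g; rewrite !act_dd; auto).
    destruct (F2 Hm Hxz (g y)); try lia. exfalso; apply (NoQ1 (g y)); auto; lia. }
  assert (Hy' : dd adj y (g x) < dd adj y (g z)).
  { destruct (F2 Hm Hgxz y); try lia. exfalso; apply (NoQ1 y); auto; lia. }
  assert (Dyy : dd adj y (g y) = l) by (specialize (Hy x); specialize (Hl y); lia).
  destruct (gate Hm y Hxz) as [p [Hp Hgate]].
  destruct (dd adj y p) eqn:Eyp.
  { apply dd_zero in Eyp; auto. subst. lia. }
  destruct (dd_step Hm Eyp) as [y1 [Hyy1 Dy1]].
  assert (G1 : forall w, dd adj w x < dd adj w z -> dd adj y1 w < dd adj y w).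
  { intros w Hw. specialize (Hgate w Hw). pose proof (dd_tri Hm y1 p w). lia. }
  assert (G2 : forall w, dd adj w (g x) < dd adj w (g z) -> dd adj (g y1) w < dd adj (g y) w).
  { intros w Hw. set (w' := act (-1)%Z w).
    assert (Hw' : dd adj w' x < dd adj w' z).
    { rewrite <- (act_dd Hm HZ 1%Z w' x), <- (act_dd Hm HZ 1%Z w' z). unfold w'.
      rewrite (act_inv' HZ). exact Hw. }
    pose proof (G1 w' Hw') as H.
    rewrite <- (act_dd Hm HZ 1%Z y1 w'), <- (act_dd Hm HZ 1%Z y w') in H. unfold w' in H.
    rewrite (act_inv' HZ) in H. exact H. }
  assert (C : dd adj y1 (g x) < dd adj y1 (g z)).
  { destruct (F2 Hm Hgxz y1); try lia. exfalso.
    assert (dd adj y1 x < dd adj y1 z).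
    { destruct (F2 Hm Hxz y1); try lia. exfalso; apply (NoQ1 y1); auto; lia. }
    pose proof (lemE Hm (adj_sym Hm Hxz) Hyy1 Hyz H0) as EA.
    pose proof (lemE Hm Hgxz Hyy1 Hy' ltac:(lia)) as EB.
    apply (Htwo 1%Z z x (adj_sym Hm Hxz)). intro w. rewrite !hs_iff by auto. fold g.
    rewrite (F2' Hm (adj_sym Hm Hgxz) w), (F2' Hm Hxz w), <- EA, EB. tauto. }
  pose proof (G2 y1 C). pose proof (G1 (g y) Hgy). specialize (Hl y1).
  rewrite (dd_sym Hm (g y) y1), (dd_sym Hm (g y1) y1) in *. lia.
Qed.

Lemma convex_min V (adj : V -> V -> Prop) (Hm : median_graph adj) (act : Z -> V -> V)
  (HZ : Z_action adj act) (Hcs : cospecial adj act) :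
  forall n x y z, dd adj x z = n -> minset adj act x -> minset adj act y ->
  dd adj x z + dd adj z y = dd adj x y -> minset adj act z.
Proof.
  intro n. induction n; intros x y z Hn Hx Hy Hb.
  - apply (dd_zero Hm) in Hn. subst; auto.
  - destruct (dd_step Hm Hn) as [x1 [Hx1 D1]].
    pose proof (dd_tri Hm x1 z y). pose proof (dd_tri Hm x x1 y). rewrite (dd_adj Hm Hx1) in H0.
    assert (Hx1m : minset adj act x1).
    { eapply (key Hm HZ Hcs Hx Hy Hx1). lia. }
    eapply (IHn x1 y z); auto. lia.
Qed.

Unset Implicit Arguments.
Set Strict Implicit.

Theorem lemma3p3 (V : Type) (adj : V -> V -> Prop) (v0 : V)
  (act : Z -> V -> V) :
  median_graph adj ->
  Z_action adj act ->
  free_action adj act ->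
  cospecial adj act ->
  (exists x, minset adj act x) /\
  (forall n x, minset adj act x -> minset adj act (act n x)) /\
  convex_set adj (minset adj act).
Proof.
  intros Hm HZ _ Hcs. split; [|split].
  - destruct (@least (fun n => exists x, dd adj x (act 1%Z x) = n)) as [n [[x Hx] Hmin]].
    { exists (dd adj v0 (act 1%Z v0)), v0; auto. }
    exists x. apply (minset_iff Hm). intro y. rewrite Hx. apply Hmin. eauto.
  - intros n x Hx. rewrite (minset_iff Hm) in *. intro y. specialize (Hx y).
    destruct HZ as [H0 [H1 H2]] eqn:EZ.
    rewrite <- H1, Z.add_comm, H1, (act_dd Hm HZ). auto.
  - intros x y z Hx Hy Hb. rewrite (between_iff Hm) in Hb.
    eapply (convex_min Hm HZ Hcs eq_refl Hx Hy Hb).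
Qed.
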